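(* Let $n\geq 0$ and $0\leq l,m\leq n$ be integers. Then, as an identity of rational functions in $q$ and $z$, \[ \sum_{\substack{k=0\\ k\neq m}}^{n}{n\brack k}\frac{(q/z;q)_k (zq^{-l};q)_{n-k}}{1-q^{k-m}} z^k =(-1)^m q^{\binom{m+1}{2}}{n\brack m}(zq^{-l};q)_l(zq^{-m};q)_{n-l}\left(\sum_{k=0}^{n-l-1}\frac{zq^{k-m}}{1-zq^{k-m}} - \sum_{\substack{k=0\\ k\neq m}}^{n}\frac{q^{k-m}}{1-q^{k-m}} \right). \]
   Context: For $N\geq 0$, $(x;q)_N=(1-x)(1-xq)\cdots(1-xq^{N-1})$ (with $(x;q)_0=1$). The $q$-binomial coefficient is ${n\brack k}=\frac{(q;q)_n}{(q;q)_k(q;q)_{n-k}}$ for $0\leq k\leq n$ and $0$ otherwise. *)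

(* Defs.v *)
From HB Require Import structures.
From mathcomp Require Import all_boot all_order all_algebra.
Set Implicit Arguments. Unset Strict Implicit. Unset Printing Implicit Defensive.
Import Order.TTheory GRing.Theory Num.Theory.
Local Open Scope ring_scope.

Definition qpoch (R : ringType) (x q : R) (N : nat) : R :=
  \prod_(i < N) (1 - x * q ^+ i).

Definition qbinom (R : unitRingType) (q : R) (n k : nat) : R :=
  if (k <= n)%N then qpoch q q n / (qpoch q q k * qpoch q q (n - k)) else 0.

(* The field Q(q) of rational functions in q, and Q(q)(z) = Q(q,z). *)
Definition Fq := {fraction {poly rat}}.
Definition Fqz := {fraction {poly Fq}}.

Definition qv : Fqz := tofrac ((tofrac ('X : {poly rat}) : Fq)%:P).
Definition zv : Fqz := tofrac ('X : {poly Fq}).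

(* Main.v *)
Require Import Defs.
From HB Require Import structures.
From mathcomp Require Import all_boot all_order all_algebra.
From mathcomp Require Import ring zify.
Import Order.TTheory GRing.Theory Num.Theory.
Local Open Scope ring_scope.


Section GL.
Variable F : fieldType.

Lemma deriv_prod_seq (I : eqType) (r : seq I) (P : pred I) (f : I -> {poly F}) :
  uniq r ->
  (\prod_(i <- r | P i) f i)^`() =
  \sum_(i <- r | P i) (f i)^`() * \prod_(j <- r | P j && (j != i)) f j.
Proof.
elim: r => [|a r IH] /=; first by rewrite !big_nil derivC.
case/andP => anr ur.
have E1 : \prod_(j <- r | P j && (j != a)) f j = \prod_(j <- r | P j) f j.
  rewrite big_seq_cond [RHS]big_seq_cond; apply: eq_bigl => j.
  case jr: (j \in r) => //=; case: (P j) => //=.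
  by apply/negP => /eqP ja; rewrite -ja jr in anr.
have E2 : \sum_(i <- r | P i) (f i)^`() * \prod_(j <- a :: r | P j && (j != i)) f j
   = \sum_(i <- r | P i) (f i)^`() * (if P a then f a else 1) *
         \prod_(j <- r | P j && (j != i)) f j.
  rewrite big_seq_cond [RHS]big_seq_cond; apply: eq_bigr => i /andP [ir _].
  rewrite big_cons.
  have -> : (a != i) by apply/negP => /eqP ai; rewrite ai ir in anr.
  by case: (P a) => /=; rewrite ?mulrA ?mulr1.
rewrite !big_cons E2.
case Pa: (P a) => /=; last by rewrite IH //; apply: eq_bigr => i _; rewrite mulr1.
rewrite eqxx /= E1 derivM IH //; congr (_ + _).
rewrite mulr_sumr; apply: eq_bigr => i _; rewrite !mulrA; congr (_ * _).
by rewrite mulrC.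
Qed.

Variables (x : nat -> F) (xinj : injective x) (n : nat) (m : 'I_n.+1).

Definition ww (k : 'I_n.+1) := \prod_(j < n.+1 | j != k) (x k - x j).

Lemma ww_neq0 k : ww k != 0.
Proof.
apply/prodf_neq0 => j jk; rewrite subr_eq0; apply/negP => /eqP/xinj E.
by move: jk; rewrite -(inj_eq val_inj) /= E eqxx.
Qed.

Lemma xsub_neq0 (i j : 'I_n.+1) : i != j -> x i - x j != 0.
Proof.
move=> ij; rewrite subr_eq0; apply/negP => /eqP/xinj E.
by move: ij; rewrite -(inj_eq val_inj) /= E eqxx.
Qed.

Lemma ww_split (i : 'I_n.+1) : i != m ->
  ww m = (x m - x i) * \prod_(j < n.+1 | (j != m) && (j != i)) (x m - x j).
Proof. by move=> im; rewrite /ww (bigD1 i) //= eq_sym. Qed.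

Definition PP (k : 'I_n.+1) := \prod_(j < n.+1 | j != k) ('X - (x j)%:P).

Lemma PP_x k : (PP k).[x k] = ww k.
Proof. by rewrite /PP horner_prod; apply: eq_bigr => j _; rewrite hornerXsubC. Qed.

Lemma D1 (i : 'I_n.+1) : i != m -> (PP i)^`().[x m] = ww m / (x m - x i).
Proof.
move=> im; rewrite (ww_split _ im) [X in X / _]mulrC mulfK; last by apply: xsub_neq0; rewrite eq_sym.
rewrite /PP (bigD1 m) 1?eq_sym //=.
rewrite derivM derivXsubC mul1r hornerD hornerM hornerXsubC subrr mul0r addr0.
rewrite horner_prod; apply: eq_big => j; first by rewrite andbC.
by rewrite hornerXsubC.
Qed.

Lemma D2 : (PP m)^`().[x m] = ww m * \sum_(j < n.+1 | j != m) (x m - x j)^-1.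
Proof.
rewrite /PP deriv_prod_seq ?index_enum_uniq // horner_sum mulr_sumr.
apply: eq_bigr => i im; rewrite derivXsubC mul1r (ww_split _ im) [X in X / _]mulrC mulfK; last by apply: xsub_neq0; rewrite eq_sym.
rewrite horner_prod; apply: eq_bigr => j _; by rewrite hornerXsubC.
Qed.

Lemma GL (A : {poly F}) : (size A <= n.+1)%N ->
  A^`().[x m] = \sum_(k < n.+1 | k != m) A.[x k] * ww m / ((x m - x k) * ww k)
     + A.[x m] * \sum_(j < n.+1 | j != m) (x m - x j)^-1.
Proof.
move=> sA; rewrite {1}(lagrange_gen (ltn0Sn n) xinj sA).
rewrite raddf_sum horner_sum (bigD1 m) //= addrC; congr (_ + _).
  apply: eq_bigr => k km; rewrite (lagrangeE (ltn0Sn n) xinj) /= !deriv_mulC !hornerE.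
  rewrite -/(PP k) PP_x D1 //.
  change (A.[x k] * (ww k)^-1 * (ww m / (x m - x k)) = A.[x k] * ww m / ((x m - x k) * ww k)).
  by field; rewrite ww_neq0 xsub_neq0 1?eq_sym.

rewrite (lagrangeE (ltn0Sn n) xinj) /= !deriv_mulC !hornerE.
rewrite -/(PP m) PP_x D2.
change (A.[x m] * (ww m)^-1 * (ww m * \sum_(j < n.+1 | j != m) (x m - x j)^-1) = A.[x m] * \sum_(j < n.+1 | j != m) (x m - x j)^-1).
by rewrite -mulrA mulKf ?ww_neq0.
Qed.
End GL.


Section QP.
Variable F : fieldType.
Implicit Types (x b : F).

Lemma qpochSr x b k : qpoch x b k.+1 = qpoch x b k * (1 - x * b ^+ k).
Proof. by rewrite /qpoch big_ord_recr. Qed.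

Lemma qpochSl x b k : qpoch x b k.+1 = (1 - x) * qpoch (x * b) b k.
Proof.
rewrite /qpoch big_ord_recl expr0 mulr1; congr (_ * _).
by apply: eq_bigr => i _; rewrite /= exprS mulrA.
Qed.

Lemma qpochD x b u v : qpoch x b (u + v) = qpoch x b u * qpoch (x * b ^+ u) b v.
Proof.
rewrite /qpoch big_split_ord; congr (_ * _).
by apply: eq_bigr => i _; rewrite /= exprD mulrA.
Qed.

Lemma qpoch0 x b : qpoch x b 0 = 1.
Proof. by rewrite /qpoch big_ord0. Qed.
End QP.

Section Q.
Variables (F : fieldType) (q z : F).
Hypotheses (hq0 : q != 0) (hz0 : z != 0)
  (hq : forall k, (0 < k)%N -> q ^+ k != 1)
  (hz : forall a b : nat, z * q ^+ a != q ^+ b).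
Local Notation p := (q^-1).

Lemma pq k : p ^+ k = (q ^+ k)^-1. Proof. by rewrite exprVn. Qed.
Lemma qk_neq0 k : q ^+ k != 0. Proof. exact: expf_neq0. Qed.
Lemma pk_neq0 k : p ^+ k != 0. Proof. by rewrite pq invr_eq0 qk_neq0. Qed.

Lemma qp_eq a b c d : (a + d = b + c)%N -> q^+a * p^+b = q^+c * p^+d.
Proof.
move=> H; rewrite !pq; apply/eqP; rewrite eqr_div ?qk_neq0 // -!exprD H addnC //.
Qed.

Lemma qpow_inj a b : q ^+ a = q ^+ b -> a = b.
Proof.
wlog ab : a b / (a <= b)%N.
  move=> W E; case: (leqP a b) => h; first exact: W.
  by symmetry; apply: W; [apply: ltnW | ].
move=> E; case: (ltnP a b) => h; last by apply/eqP; rewrite eqn_leq ab h.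
exfalso; have H := hq (b - a); rewrite subn_gt0 h in H; move: (H isT).
have : q ^+ b = q ^+ a * q ^+ (b - a) by rewrite -exprD subnKC.
rewrite -E => /esym/eqP; rewrite -subr_eq0 -{2}[q ^+ a]mulr1 -mulrBr mulf_eq0.
by rewrite (negbTE (qk_neq0 a)) /= subr_eq0 => ->.
Qed.

Lemma nz1 k m : k != m -> 1 - q ^+ k * p ^+ m != 0.
Proof.
move=> km; rewrite subr_eq0 eq_sym pq; apply/negP => /eqP E.
have : q ^+ k = q ^+ m by rewrite -[LHS](mulfVK (qk_neq0 m)) E mul1r.
by move/qpow_inj => e; rewrite e eqxx in km.
Qed.

Lemma nz2 a b : 1 - z * q ^+ a * p ^+ b != 0.
Proof.
rewrite subr_eq0 eq_sym pq; apply/negP => /eqP E.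
have : z * q ^+ a = q ^+ b by rewrite -[LHS](mulfVK (qk_neq0 b)) E mul1r.
by move/eqP; rewrite (negbTE (hz a b)).
Qed.

Lemma nzp1 k : 1 - p ^+ k.+1 != 0.
Proof. by rewrite subr_eq0 eq_sym pq invr_eq1 hq. Qed.

Lemma qpochpp_neq0 k : qpoch p p k != 0.
Proof. by apply/prodf_neq0 => i _; rewrite -exprS nzp1. Qed.

Lemma c1 k : qpoch q q k = (-1) ^+ k * q ^+ 'C(k.+1, 2) * qpoch p p k.
Proof.
elim: k => [|k IH]; first by rewrite !qpoch0 expr0 mul1r mulr1.
rewrite !qpochSr IH (binS k.+1 1) bin1 exprD -!exprS !pq exprS.
have := qk_neq0 k.+1; rewrite exprS => H.
move: (qpoch p p k) (q ^+ k) (q ^+ 'C(k.+1, 2)) H => P Q C H. rewrite exprS; move: ((-1) ^+ k) => S. field; by move: H; rewrite mulf_eq0 negb_or andbC.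
Qed.
End Q.


Section Q2.
Variables (F : fieldType) (q z : F).
Hypotheses (hq0 : q != 0) (hz0 : z != 0)
  (hq : forall k, (0 < k)%N -> q ^+ k != 1)
  (hz : forall a b : nat, z * q ^+ a != q ^+ b).
Local Notation p := (q^-1).

Lemma cL k : \prod_(0 <= j < k) (p ^+ k - p ^+ j) = (-1) ^+ k * p ^+ 'C(k, 2) * qpoch p p k.
Proof.
elim: k => [|k IH]; first by rewrite big_geq // qpoch0 expr0 bin0n expr0 !mulr1.
rewrite big_nat_recl // (eq_bigr (fun j => p * (p ^+ k - p ^+ j))); last first.
  by move=> j _; rewrite !exprS mulrBr.
rewrite big_split /= prodr_const_nat subn0 IH qpochSr binS bin1 exprD -exprS.
rewrite !exprS expr0.
move: ((-1) ^+ k) (p ^+ k) (p ^+ 'C(k, 2)) (qpoch p p k) => S P C Q.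
ring.
Qed.

Lemma cR k d : \prod_(0 <= i < d) (p ^+ k - p ^+ (i + k.+1)) = p ^+ (k * d) * qpoch p p d.
Proof.
rewrite (eq_bigr (fun i => p ^+ k * (1 - p * p ^+ i))); last first.
  move=> i _; rewrite addnS exprS exprD; move: (p ^+ i) (p ^+ k) => A B; ring.
rewrite big_split /= prodr_const_nat subn0 exprM /qpoch big_mkord.
by [].
Qed.

Lemma wsplit n (k : 'I_n.+1) : ww _ (fun j => p ^+ j) n k =
  (\prod_(0 <= j < k) (p ^+ k - p ^+ j)) * \prod_(0 <= i < n - k) (p ^+ k - p ^+ (i + k.+1)).
Proof.
rewrite /ww (eq_bigl (fun j : 'I_n.+1 => (j : nat) != k)) //.
rewrite -(big_mkord (fun j : nat => j != k) (fun j => p ^+ k - p ^+ j)).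
rewrite (big_cat_nat _ (n := k)) //=; last by apply: ltnW.
congr (_ * _).
  rewrite big_nat_cond [RHS]big_nat_cond; apply: eq_bigl => j.
  by rewrite andbT; case h: (0 <= j < k)%N => //=; apply/eqP; move: h; lia.
rewrite big_ltn_cond // eqxx /= -{1}(add0n k.+1) big_addn subSS.
by apply: eq_bigl => i; apply/eqP; lia.
Qed.

Lemma binC k d : ('C((k + d).+1, 2) = 'C(k.+1, 2) + 'C(d.+1, 2) + k * d)%N.
Proof.
elim: d => [|d IH]; first by rewrite !addn0 muln0 addn0.
rewrite addnS (binS (k + d).+1 1) bin1 IH (binS d.+1 1) bin1.
set a := 'C(k.+1, 2); set b := 'C(d.+1, 2); lia.
Qed.

Lemma weight n (k : 'I_n.+1) :
  qbinom q n k * ((-1) ^+ k * q ^+ 'C(k.+1, 2)) * (p ^+ k * ww _ (fun j => p ^+ j) n k)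
  = qpoch p p n.
Proof.
have kn : (k <= n)%N by rewrite -ltnS.
rewrite /qbinom kn wsplit cL cR !(@c1 _ q hq0).
move: (nat_of_ord k) kn => {}k kn.
move: (n - k)%N (subnKC kn) => d <-.
rewrite binC (binS k 1) bin1.
move: ('C(d.+1, 2)) ('C(k, 2)) (k * d)%N => cd ck kd.
rewrite !exprD !pq.
have sg : (-1) ^+ k * (-1) ^+ k = 1 :> F by rewrite -exprMn mulrNN mulr1 expr1n.
transitivity (qpoch p p (k + d) * ((-1) ^+ k * (-1) ^+ k)); last by rewrite sg mulr1.
have := qpochpp_neq0 _ _ hq k; have := qpochpp_neq0 _ _ hq d.
have := qk_neq0 _ _ hq0 k; have := qk_neq0 _ _ hq0 ck; have := qk_neq0 _ _ hq0 cd.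
have := qk_neq0 _ _ hq0 kd.
have : (-1) ^+ k != 0 :> F by rewrite signr_eq0.
have : (-1) ^+ d != 0 :> F by rewrite signr_eq0.
move: ((-1) ^+ k) ((-1) ^+ d) (q ^+ k) (q ^+ ck) (q ^+ cd) (q ^+ kd).
move: (qpoch p p k) (qpoch p p d) (qpoch p p (k + d)).
move=> Pk Pd Pn S1 S2 Q1 Q2 Q3 Q4 h1 h2 h3 h4 h5 h6 h7 h8.
field.
by rewrite h1 h2 h3 h4 h5 h6 h7 h8.
Qed.
End Q2.


Section Q3.
Variables (F : fieldType) (q z : F).
Hypotheses (hq0 : q != 0) (hz0 : z != 0)
  (hq : forall k, (0 < k)%N -> q ^+ k != 1)
  (hz : forall a b : nat, z * q ^+ a != q ^+ b).
Local Notation p := (q^-1).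

Lemma S1 n l k : (l <= n)%N -> (k <= n)%N ->
  z ^+ k * (qpoch (q / z) q k * qpoch (z * p ^+ l) q (n - k)) =
  (-1) ^+ k * q ^+ 'C(k.+1, 2) * (qpoch (z * p ^+ l) q l * qpoch (z * p ^+ k) q (n - l)).
Proof.
move=> hl; elim: k => [|k IH] hk.
  rewrite expr0 mul1r qpoch0 mul1r subn0 expr0 mul1r (_ : 'C(1, 2) = 0%N) // expr0 mul1r.
  rewrite expr0 mulr1 -{1}(subnKC hl) qpochD; congr (_ * qpoch _ _ _).
  by rewrite (@pq _ q) -mulrA mulVf ?(@qk_neq0 _ q hq0) // mulr1.
have IH' := IH (ltnW hk).
set c := 1 - z * q ^+ (n - l) * p ^+ k.+1.
have cnz : c != 0 by apply: (@nz2 _ q z hq0 hz).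
have e1 : qpoch (z * p ^+ l) q (n - k) = qpoch (z * p ^+ l) q (n - k.+1) * c.
  rewrite -(subnSK hk) qpochSr; congr (_ * (1 - _)); rewrite -!mulrA; congr (z * _).
  by rewrite mulrC; apply: (@qp_eq _ q hq0); lia.
have e2 : qpoch (z * p ^+ k.+1) q (n - l) * c = (1 - z * p ^+ k.+1) * qpoch (z * p ^+ k) q (n - l).
  rewrite /c (mulrAC z) -qpochSr qpochSl; congr (_ * qpoch _ _ _).
  by rewrite exprS -mulrA mulrAC mulVf // mul1r.
apply: (mulIf cnz).
have -> : z ^+ k.+1 * (qpoch (q / z) q k.+1 * qpoch (z * p ^+ l) q (n - k.+1)) * c
   = (z - q ^+ k.+1) * (z ^+ k * (qpoch (q / z) q k * qpoch (z * p ^+ l) q (n - k))).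
  rewrite e1 qpochSr !exprS.
  move: (z ^+ k) (q ^+ k) (qpoch (q / z) q k) (qpoch (z * p ^+ l) q (n - k.+1)) => Z Q P1 P2.
  by field.
rewrite IH' -!mulrA e2 (binS k.+1 1) bin1 exprD !(@pq _ q) !exprS.
have := @qk_neq0 _ q hq0 k.
move: ((-1) ^+ k) (q ^+ k) (q ^+ 'C(k.+1, 2)) (qpoch (z * p ^+ l) q l) (qpoch (z * p ^+ k) q (n - l)).
move=> S Q C P1 P2 hQ.
by field; rewrite hQ hq0.
Qed.

Definition AA N : {poly F} := \prod_(i < N) (1 - (z * q ^+ i)%:P * 'X).

Lemma AA_eval N y : (AA N).[y] = \prod_(i < N) (1 - z * q ^+ i * y).
Proof.
by rewrite /AA horner_prod; apply: eq_bigr => i _; rewrite hornerD hornerN hornerM hornerC hornerX hornerC.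
Qed.

Lemma lin_size (c : F) : (size ((1 - c%:P * 'X)%R : {poly F}) <= 2)%N.
Proof.
have -> : 1 - c%:P * 'X = (- c)%:P * 'X + 1%:P :> {poly F}.
  by rewrite polyCN mulNr addrC.
rewrite size_MXaddC; case: ifP => // _; rewrite ltnS; exact: size_polyC_leq1.
Qed.

Lemma AA_size N : (size (AA N) <= N.+1)%N.
Proof.
elim: N => [|N IH]; first by rewrite /AA big_ord0 size_poly1.
rewrite /AA big_ord_recr /=; apply: leq_trans (size_polyMleq _ _) _.
have := lin_size (z * q ^+ N); rewrite -/(AA N); move: IH; lia.
Qed.

Lemma AA_deriv N y : (AA N)^`().[y] =
  \sum_(i < N) (- (z * q ^+ i)) * \prod_(j < N | j != i) (1 - z * q ^+ j * y).
Proof.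
rewrite /AA deriv_prod_seq ?index_enum_uniq // horner_sum; apply: eq_bigr => i _.
rewrite derivB derivC deriv_mulC derivX mulr1 sub0r hornerM hornerN hornerC horner_prod.
congr (_ * _); apply: eq_bigr => j _.
by rewrite hornerD hornerN hornerM hornerC hornerX hornerC.
Qed.

Lemma AA_rel N y : (forall i, 1 - z * q ^+ i * y != 0) ->
  - y * (AA N)^`().[y] = (AA N).[y] * \sum_(i < N) z * q ^+ i * y / (1 - z * q ^+ i * y).
Proof.
move=> nz; rewrite AA_deriv mulr_sumr mulr_sumr; apply: eq_bigr => i _.
rewrite AA_eval [X in _ = X * _](bigD1 i) //=.
have := nz i; move: (\prod_(j < N | j != i) (1 - z * q ^+ j * y)) (z * q ^+ i) => P b h.
by field.
Qed.
End Q3.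


Section Q4.
Variables (F : fieldType) (q z : F).
Hypotheses (hq0 : q != 0) (hz0 : z != 0)
  (hq : forall k, (0 < k)%N -> q ^+ k != 1)
  (hz : forall a b : nat, z * q ^+ a != q ^+ b).
Local Notation p := (q^-1).

Lemma xinj : injective (fun j : nat => p ^+ j).
Proof.
move=> a b /= E; apply: (qpow_inj _ _ hq0 hq).
by have := congr1 GRing.inv E; rewrite !(pq _ q) !invrK.
Qed.

Theorem G n l m (hl : (l <= n)%N) (hm : (m <= n)%N) :
  \sum_(0 <= k < n.+1 | k != m)
     qbinom q n k * (qpoch (q / z) q k * qpoch (z * p ^+ l) q (n - k))
       / (1 - q ^+ k * p ^+ m) * z ^+ k
  = (-1) ^+ m * q ^+ 'C(m.+1, 2) * qbinom q n m
      * qpoch (z * p ^+ l) q l * qpoch (z * p ^+ m) q (n - l)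
      * (\sum_(0 <= k < n - l) z * (q ^+ k * p ^+ m) / (1 - z * (q ^+ k * p ^+ m))
         - \sum_(0 <= k < n.+1 | k != m) q ^+ k * p ^+ m / (1 - q ^+ k * p ^+ m)).
Proof.
have hm' : (m < n.+1)%N by [].
pose mo := Ordinal hm'.
have xi := xinj.
set N := (n - l)%N.
have sA : (size (AA _ q z N) <= n.+1)%N.
  by apply: leq_trans (AA_size _ _ _ hq0 hz0 _) _; rewrite ltnS leq_subr.
have GLm := GL _ _ xi _ mo _ sA.
have Ak k : (AA _ q z N).[p ^+ k] = qpoch (z * p ^+ k) q N.
  by rewrite AA_eval /qpoch; apply: eq_bigr => i _; rewrite mulrAC.
have step1 : \sum_(0 <= k < n.+1 | k != m)
     qbinom q n k * (qpoch (q / z) q k * qpoch (z * p ^+ l) q (n - k))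
       / (1 - q ^+ k * p ^+ m) * z ^+ k
   = - (qpoch (z * p ^+ l) q l * qpoch p p n / ww _ (fun j => p ^+ j) n mo) *
     \sum_(k < n.+1 | k != mo) (AA _ q z N).[p ^+ k] * ww _ (fun j => p ^+ j) n mo /
        ((p ^+ m - p ^+ k) * ww _ (fun j => p ^+ j) n k).
  rewrite mulr_sumr big_mkord; apply: eq_big => // k km.
  have kn : (k <= n)%N by rewrite -ltnS.
  have hS := S1 _ _ _ hq0 hz0 hz _ _ _ hl kn.
  have hW := weight _ _ _ hq0 hz0 hq _ k.
  rewrite Ak -hW.
  set X := qpoch (q / z) q k * _.
  have hX : X = (-1) ^+ k * q ^+ 'C(k.+1, 2) * (qpoch (z * p ^+ l) q l * qpoch (z * p ^+ k) q N) / z ^+ k.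
    by rewrite -hS [RHS]mulrC mulKf // expf_neq0.
  rewrite hX.
  have h1 := ww_neq0 _ _ xi _ k; have h2 := ww_neq0 _ _ xi _ mo.
  have h3 : q ^+ k != q ^+ m.
    by apply/negP => /eqP /(qpow_inj _ _ hq0 hq) E; rewrite E eqxx in km.
  have h4 := qk_neq0 _ _ hq0 k; have h5 := qk_neq0 _ _ hq0 m.
  have h6 : z ^+ k != 0 by rewrite expf_neq0.
  have h7 : (-1) ^+ k * q ^+ 'C(k.+1, 2) != 0 :> F by rewrite mulf_neq0 ?signr_eq0 ?(qk_neq0 _ _ hq0).
  move: h7; move: ((-1) ^+ k * q ^+ 'C(k.+1, 2)) => S h7.
  move: (qbinom q n k) (qpoch (z * p ^+ l) q l) (qpoch (z * p ^+ k) q N) => B D P.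
  rewrite !(pq _ q).
  move: h1 h2 h3 h4 h5 h6.
  move: (ww _ _ n k) (ww _ _ n mo) (q ^+ k) (q ^+ m) (z ^+ k).
  move=> wk wm Qk Qm Zk h1 h2 h3 h4 h5 h6.
  by field; rewrite h1 h2 h4 h5 h6 mulN1r !subr_eq0 h3 eq_sym h3.
rewrite step1.
set T := \sum_(j < n.+1 | j != mo) (p ^+ mo - p ^+ j)^-1.
rewrite (_ : \sum_(k < n.+1 | k != mo) _ = (AA _ q z N)^`().[p ^+ mo] - (AA _ q z N).[p ^+ mo] * T); last by rewrite GLm addrK.
have Sq : \sum_(0 <= k < n.+1 | k != m) q ^+ k * p ^+ m / (1 - q ^+ k * p ^+ m) = - (p ^+ m * T).
  rewrite /T mulr_sumr -sumrN big_mkord; apply: eq_big => // k km.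
  have h3 : q ^+ k != q ^+ m.
    by apply/negP => /eqP /(qpow_inj _ _ hq0 hq) E; rewrite E eqxx in km.
  have h4 := qk_neq0 _ _ hq0 k; have h5 := qk_neq0 _ _ hq0 m.
  rewrite /= !(pq _ q); move: h3 h4 h5; move: (q ^+ k) (q ^+ m) => Qk Qm h3 h4 h5.
  by field; rewrite h4 h5 mulN1r !subr_eq0 h3 eq_sym h3.
have nzm : forall i, 1 - z * q ^+ i * p ^+ m != 0 by move=> i; apply: nz2.
have Amnz : (AA _ q z N).[p ^+ m] != 0.
  by rewrite AA_eval; apply/prodf_neq0 => i _; apply: nz2.
have Sz : \sum_(0 <= k < N) z * (q ^+ k * p ^+ m) / (1 - z * (q ^+ k * p ^+ m))
   = - (p ^+ m * (AA _ q z N)^`().[p ^+ m]) / (AA _ q z N).[p ^+ m].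
  rewrite big_mkord -mulNr AA_rel // [RHS]mulrC mulKf //.
  by apply: eq_bigr => i _; rewrite !mulrA.
rewrite Sq Sz -Ak -(weight _ _ _ hq0 hz0 hq _ mo) /=.
have h2 := ww_neq0 _ _ xi _ mo.
have h5 := pk_neq0 _ _ hq0 m.
clear Sq Sz GLm; move: h2 h5 Amnz.
move: (ww _ _ n mo) (p ^+ m) ((AA _ q z N).[p ^+ m]) ((AA _ q z N)^`().[p ^+ m]) T.
move: (qbinom q n m) ((-1) ^+ m * q ^+ 'C(m.+1, 2)) (qpoch (z * p ^+ l) q l).
move=> B S D wm pm Am A' T' h1 h2 h3.
by field; rewrite h1 h3.
Qed.
End Q4.


Lemma zconv (F : fieldType) (q : F) (hq : q != 0) (a b : nat) :
  q ^ (a%:Z - b%:Z) = q ^+ a * q^-1 ^+ b.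
Proof. by rewrite expfzDr // -exprnN exprVn. Qed.

Lemma zconvN (F : fieldType) (q : F) (b : nat) : q ^ (- b%:Z) = q^-1 ^+ b.
Proof. by rewrite -exprnN exprVn. Qed.

Definition Xq : Fq := tofrac ('X : {poly rat}).

Lemma Xq_neq0 : Xq != 0.
Proof. by rewrite tofrac_eq0 polyX_eq0. Qed.

Lemma qv_neq0 : qv != 0.
Proof. by rewrite /qv tofrac_eq0 polyC_eq0 Xq_neq0. Qed.

Lemma zv_neq0 : zv != 0.
Proof. by rewrite /zv tofrac_eq0 polyX_eq0. Qed.

Lemma qvX k : qv ^+ k = tofrac ((Xq ^+ k)%:P).
Proof. by rewrite /qv -rmorphXn /= -rmorphXn. Qed.

Lemma qv_hq k : (0 < k)%N -> qv ^+ k != 1.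
Proof.
move=> k0; rewrite qvX -[1]tofrac1 tofrac_eq -polyC1 (inj_eq polyC_inj).
rewrite /Xq -rmorphXn -[1]tofrac1 tofrac_eq.
apply/negP => /eqP E; have := congr1 (fun r : {poly rat} => size r) E.
rewrite /= size_polyXn size_poly1; case: (k) k0 => // ? _ [] //.
Qed.

Lemma zv_hz a b : zv * qv ^+ a != qv ^+ b.
Proof.
rewrite !qvX /zv -rmorphM tofrac_eq; apply/negP => /eqP E.
have E1 : size ('X * (Xq ^+ a)%:P) = size ((Xq ^+ b)%:P) by rewrite E.
rewrite size_XmulC in E1; last by rewrite expf_neq0 // Xq_neq0.
by have := size_polyC_leq1 (Xq ^+ b); rewrite -E1.
Qed.

Theorem theorem1p1 (n l m : nat) (hl : (l <= n)%N) (hm : (m <= n)%N) :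
  \sum_(0 <= k < n.+1 | k != m)
     qbinom qv n k
       * (qpoch (qv / zv) qv k * qpoch (zv * qv ^ (- (l%:Z))) qv (n - k))
       / (1 - qv ^ (k%:Z - m%:Z)) * zv ^+ k
  = (-1) ^+ m * qv ^+ 'C(m.+1, 2) * qbinom qv n m
      * qpoch (zv * qv ^ (- (l%:Z))) qv l
      * qpoch (zv * qv ^ (- (m%:Z))) qv (n - l)
      * (\sum_(0 <= k < n - l) zv * qv ^ (k%:Z - m%:Z) / (1 - zv * qv ^ (k%:Z - m%:Z))
         - \sum_(0 <= k < n.+1 | k != m) qv ^ (k%:Z - m%:Z) / (1 - qv ^ (k%:Z - m%:Z))).
Proof.
rewrite !zconvN.
under eq_bigr => k _ do rewrite (@zconv _ _ qv_neq0).
under [\sum_(0 <= k < n - l) _]eq_bigr => k _ do rewrite (@zconv _ _ qv_neq0).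
under [\sum_(0 <= k < n.+1 | k != m) (qv ^ _ / _)]eq_bigr => k _ do rewrite (@zconv _ _ qv_neq0).
exact: (@G _ qv zv qv_neq0 zv_neq0 qv_hq zv_hz n l m hl hm).
Qed.
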